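(* Let $(X,d)$ be a separable metric space and let $\mu$ be a finite nonatomic Radon measure on $X$ giving positive measure to each nonempty open set. Let $T$ be an invertible measure-preserving transformation of $(X,\mu)$ that is rigid. Then for every $\epsilon>0$ there exist a measurable set $B\subset X$ with $\mu(B)<\epsilon$ and a sequence of natural numbers $m_j\to\infty$ such that $\sup_{x\in X\setminus B} d(x,T^{m_j}x)\to 0$ as $j\to\infty$; that is, $T$ is uniformly rigid on $X\setminus B$.
   Context: $T$ is rigid if there is a sequence of natural numbers $n_k\to\infty$ such that $\mu(A\triangle T^{n_k}A)\to 0$ for every measurable $A$ of finite measure. For $Y\subset X$, $T$ is uniformly rigid on $Y$ if there is a sequence $m_j\to\infty$ with $d(y,T^{m_j}y)\to0$ uniformly in $y\in Y$. *)

(* Defs.v *)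
From HB Require Import structures.
From mathcomp Require Import all_boot all_order all_algebra.
From mathcomp Require Import all_classical all_reals all_analysis.
Set Implicit Arguments. Unset Strict Implicit. Unset Printing Implicit Defensive.
Import Order.TTheory GRing.Theory Num.Theory.
Local Open Scope classical_set_scope.
Local Open Scope ring_scope.

Section defs.
Context {R : realType} {X : Type}.

Definition is_metric (d : X -> X -> R) : Prop :=
  (forall x y, 0 <= d x y) /\ (forall x y, d x y = 0 <-> x = y) /\
  (forall x y, d x y = d y x) /\ (forall x y z, d x z <= d x y + d y z).

Definition dball (d : X -> X -> R) (x : X) (r : R) : set X := [set y | d x y < r].

Definition d_open (d : X -> X -> R) (U : set X) : Prop :=
  forall x, U x -> exists2 r : R, 0 < r & dball d x r `<=` U.

Definition d_compact (d : X -> X -> R) (K : set X) : Prop :=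
  forall (I : Type) (U : I -> set X), (forall i, d_open d (U i)) ->
    K `<=` \bigcup_i U i ->
    exists2 F : set I, finite_set F & K `<=` \bigcup_(i in F) U i.

Definition d_separable (d : X -> X -> R) : Prop :=
  exists D : set X, countable D /\
    forall x (r : R), 0 < r -> exists2 y, D y & d x y < r.

Definition symdiff (A B : set X) : set X := (A `\` B) `|` (B `\` A).

Definition nat_to_infty (n : nat -> nat) : Prop :=
  forall N, exists K, forall k, (K <= k)%N -> (N <= n k)%N.
End defs.

Section measure_defs.
Context {R : realType} {dsp : measure_display} {X : measurableType dsp}.

Definition borel_of (d : X -> X -> R) : Prop :=
  @measurable dsp X = <<s d_open d >>.

Definition nonatomic (mu : set X -> \bar R) : Prop :=
  forall A, measurable A -> (0 < mu A)%E ->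
    exists B, [/\ measurable B, B `<=` A, (0 < mu B)%E & (mu B < mu A)%E].

Definition radon (d : X -> X -> R) (mu : set X -> \bar R) : Prop :=
  (forall x, exists2 r : R, 0 < r & (mu (dball d x r) < +oo)%E) /\
  (forall A, measurable A ->
     mu A = ereal_sup [set mu K | K in [set K | d_compact d K /\ K `<=` A]]).

Definition invertible_mp (mu : set X -> \bar R) (T : X -> X) : Prop :=
  exists Tinv : X -> X, [/\ cancel T Tinv, cancel Tinv T,
    measurable_fun setT T, measurable_fun setT Tinv &
    forall A, measurable A -> mu (T @^-1` A) = mu A].

Definition rigid (mu : set X -> \bar R) (T : X -> X) : Prop :=
  exists n : nat -> nat, nat_to_infty n /\
    forall A, measurable A -> (mu A < +oo)%E ->
      (fun k => mu (symdiff A (iter (n k) T @` A))) @ \oo --> 0%E.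

Definition uniformly_rigid_on (d : X -> X -> R) (T : X -> X) (Y : set X) : Prop :=
  exists m : nat -> nat, nat_to_infty m /\
    forall eta : R, 0 < eta -> exists J, forall j, (J <= j)%N ->
      forall y, Y y -> d y (iter (m j) T y) < eta.
End measure_defs.

(* Main.v *)
Require Import Defs.
From HB Require Import structures.
From mathcomp Require Import all_boot all_order all_algebra.
From mathcomp Require Import all_classical all_reals all_analysis.
From mathcomp Require Import lra.
Import Order.TTheory GRing.Theory Num.Theory.
Local Open Scope classical_set_scope.
Local Open Scope ring_scope.

Fixpoint fu {X : Type} (S : nat -> set X) (N : nat) : set X :=
  if N is N'.+1 then fu S N' `|` S N' else set0.

Lemma fuP {X : Type} (S : nat -> set X) N x :
  fu S N x <-> exists2 k, (k < N)%N & S k x.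
Proof.
elim: N => [|N IH] /=; first by split => // -[].
split.
  case=> [/IH [k kN Sk]|SN]; first by exists k => //; rewrite ltnS ltnW.
  by exists N.
case=> k; rewrite ltnS leq_eqVlt => /orP[/eqP->|kN] Sk; first by right.
by left; apply/IH; exists k.
Qed.

Lemma ev_lt0 {R : realType} (u : nat -> \bar R) (eta : R) :
  u @ \oo --> 0%E -> 0 < eta -> \forall j \near \oo, (u j < eta%:E)%E.
Proof.
move=> u0 eta0.
have : nbhs (0%:E : \bar R) [set y | (y < eta%:E)%E].
  apply/(@nbhs_EFin R (fun y => (y < eta%:E)%E) 0).
  have h := @cvgr_lt R R (nbhs 0) _ id 0 cvg_id eta eta0.
  near=> x; rewrite lte_fin; near: x; exact: h.
by move/u0.
Unshelve. all: by end_near.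
Qed.

Section helpers.
Context {R : realType} {dsp : measure_display} {X : measurableType dsp}.
Variables (d : X -> X -> R) (mu : {measure set X -> \bar R}).
Hypothesis hm : is_metric d.
Hypothesis hb : borel_of d.

Lemma open_meas U : d_open d U -> measurable U.
Proof. by move=> oU; rewrite hb; exact: sub_sigma_algebra. Qed.

Lemma dball_open x r : d_open d (dball d x r).
Proof.
case: hm => d0 [dE [dC dT]].
move=> y; rewrite /dball /= => xy.
exists (r - d x y); first by rewrite subr_gt0.
move=> z /=; rewrite ltrBrDl => yz.
by apply: le_lt_trans (dT x y z) _.
Qed.

Lemma bigcup_open (I : Type) (P : set I) (F : I -> set X) :
  (forall i, d_open d (F i)) -> d_open d (\bigcup_(i in P) F i).
Proof.
move=> oF x [i Pi Fx]; have [r r0 sub] := oF i x Fx.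
by exists r => // y /sub Fy; exists i.
Qed.

Lemma fu_meas (S : nat -> set X) N : (forall k, measurable (S k)) ->
  measurable (fu S N).
Proof. by move=> mS; elim: N => //= N IH; exact: measurableU. Qed.

Lemma fu_small (S : nat -> nat -> set X) N (eta : R) :
  (forall k j, measurable (S k j)) ->
  (forall k eta, 0 < eta -> \forall j \near \oo, (mu (S k j) < eta%:E)%E) -> 0 < eta ->
  \forall j \near \oo, (mu (fu (fun k => S k j) N) < eta%:E)%E.
Proof.
move=> mS cS; elim: N eta => [|N IH] eta eta0 /=.
  by near=> j; rewrite measure0 lte_fin.
have e2 : 0 < eta / 2 by rewrite divr_gt0.
have := IH _ e2; have := cS N _ e2.
apply: filterS2 => j h1 h2.
have := measureU2 mu (fu_meas (fun k => S k j) N (fun k => mS k j)) (mS N j).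
move/le_lt_trans; apply.
by rewrite [eta](splitr eta) EFinD lteD.
Unshelve. all: by end_near.
Qed.


Variables (T Tinv : X -> X).
Hypotheses (hTK : cancel T Tinv) (hKT : cancel Tinv T).
Hypotheses (mT : measurable_fun setT T) (mTi : measurable_fun setT Tinv).
Hypothesis pres : forall A, measurable A -> mu (T @^-1` A) = mu A.

Lemma iter_meas (g : X -> X) : measurable_fun setT g ->
  forall n S, measurable S -> measurable (iter n g @^-1` S).
Proof.
move=> mg; elim=> [|n IH] S mS //.
have : measurable (g @^-1` S) by rewrite -[_ @^-1` _]setTI; exact: mg.
by move/IH.
Qed.

Lemma iter_pres n S : measurable S -> mu (iter n T @^-1` S) = mu S.
Proof.
elim: n S => [|n IH] S mS //.
have mS' : measurable (T @^-1` S) by rewrite -[_ @^-1` _]setTI; exact: mT.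
by rewrite -(pres _ mS) -(IH _ mS').
Qed.

Lemma iterK n : cancel (iter n T) (iter n Tinv).
Proof.
elim: n => [|n IH] x //.
by rewrite [iter n.+1 T x]iterS iterSr hTK IH.
Qed.

Lemma iterKi n : cancel (iter n Tinv) (iter n T).
Proof.
elim: n => [|n IH] x //.
by rewrite [iter n.+1 Tinv x]iterS iterSr hKT IH.
Qed.

Lemma image_iter n A : iter n T @` A = iter n Tinv @^-1` A.
Proof.
apply/seteqP; split => [y [x Ax <-]|y Ay] /=; first by rewrite iterK.
by exists (iter n Tinv y) => //; rewrite iterKi.
Qed.


Lemma scale (D : set X) (f : X -> nat) (injf : {in D &, injective f})
  (dense : forall x (r : R), 0 < r -> exists2 y, D y & d x y < r)
  (fin : (mu setT < +oo)%E) (n : nat -> nat) (ninf : nat_to_infty n)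
  (rig : forall A, measurable A -> (mu A < +oo)%E ->
      (fun k => mu (symdiff A (iter (n k) T @` A))) @ \oo --> 0%E)
  (delta eta : R) (M : nat) : 0 < delta -> 0 < eta ->
  exists C, [/\ measurable C, (mu C < eta%:E)%E &
    exists m, (M <= m)%N /\ forall y, ~ C y -> d y (iter m T y) < delta *+ 2].
Proof.
move=> delta0 eta0.
have [d0 [dE [dC dT]]] := hm.
pose A k := \bigcup_(y in [set y | D y /\ f y = k]) dball d y delta.
have mA k : measurable (A k) by apply: open_meas; apply: bigcup_open => y; exact: dball_open.
have cov x : exists k, A k x.
  have [y Dy xy] := dense x delta delta0.
  by exists (f y); exists y => //; rewrite /dball /= dC.
have e2 : 0 < eta / 2 by rewrite divr_gt0.
pose V N := ~` fu A N.
have mV N : measurable (V N) by apply: measurableC; exact: fu_meas.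
have hV : mu \o V @ \oo --> mu (\bigcap_N V N).
  apply: nonincreasing_cvg_mu => //.
  - by rewrite /V /= setC0.
  - exact: bigcapT_measurable.
  - apply/nonincreasing_seqP => N; rewrite subsetEset /V => x /= h1 h2.
    by apply: h1; left.
have cap0 : \bigcap_N V N = set0.
  apply/seteqP; split => // x /= h; have [k Ak] := cov x.
  by apply: (h k.+1 I); right.
rewrite cap0 measure0 in hV.
have [N0 _ HN] := @ev_lt0 R (mu \o V) _ hV e2.
set N := N0.
have HVN : (mu (V N) < (eta / 2)%:E)%E := HN N (leqnn N).
pose S k j := iter (n j) T @^-1` ((iter (n j) T @` A k) `\` A k).
have mI k j : measurable (iter (n j) T @` A k).
  by rewrite image_iter; exact: iter_meas.
have mS k j : measurable (S k j).
  by apply: iter_meas => //; apply: measurableD.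
have cS k e : 0 < e -> \forall j \near \oo, (mu (S k j) < e%:E)%E.
  move=> e0.
  have mAk : (mu (A k) < +oo)%E.
    by apply: le_lt_trans fin; apply: le_measure; rewrite ?inE.
  have := @ev_lt0 R _ _ (rig _ (mA k) mAk) e0.
  apply: filterS => j h; apply: le_lt_trans h.
  rewrite /S iter_pres; last exact: measurableD.
  apply: le_measure; rewrite ?inE //.
  - exact: measurableD.
  - by apply: measurableU; apply: measurableD.
  - by move=> x h1; right.
have := fu_small S N (eta / 2) mS cS e2.
have [K HK] := ninf M.
move=> [J _ HJ].
pose j := maxn J K.
have h1 := HJ j (leq_maxl J K).
have h2 := HK j (leq_maxr J K).
exists (V N `|` fu (fun k => S k j) N); split.
- by apply: measurableU => //; exact: fu_meas.
- apply: le_lt_trans (measureU2 mu (mV N) (fu_meas (fun k => S k j) N (fun k => mS k j))) _.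
  by rewrite [eta](splitr eta) EFinD lteD.
exists (n j); split => // y Cy.
have UN : fu A N y.
  by apply: contrapT => h; apply: Cy; left.
have [k kN Aky] := (fuP A N y).1 UN.
have nS : ~ S k j y by move=> h; apply: Cy; right; apply/fuP; exists k.
have AkT : A k (iter (n j) T y).
  apply: contrapT => h; apply: nS; split => //; by exists y.
case: Aky => c [Dc fc] cy.
case: AkT => c' [Dc' fc'] cy'.
have cc : c = c' by apply: injf; rewrite ?inE // fc fc'.
subst c'.
apply: le_lt_trans (dT y c _) _.
by rewrite mulr2n dC ltrD.
Qed.

End helpers.

Theorem mainTheorem9 (R : realType) (dsp : measure_display) (X : measurableType dsp)
  (d : X -> X -> R) (mu : {measure set X -> \bar R}) (T : X -> X) :
  is_metric d -> d_separable d -> borel_of d ->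
  (mu setT < +oo)%E -> nonatomic mu -> radon d mu ->
  (forall U, d_open d U -> U !=set0 -> (0 < mu U)%E) ->
  invertible_mp mu T -> rigid mu T ->
  forall eps : R, 0 < eps ->
    exists B : set X, [/\ measurable B, (mu B < eps%:E)%E &
      uniformly_rigid_on d T (~` B)].
Proof.
move=> hm [D [cD dense]] hb fin _ _ _ [Tinv [hTK hKT mT mTi pres]] [n [ninf rig]] eps eps0.
have [f injf] := countable_injP _ cD.
have H p : exists Cm : set X * nat, [/\ measurable Cm.1,
    (mu Cm.1 < (eps / 2 / (2 ^ p.+1)%:R)%:E)%E,
    (p <= Cm.2)%N & forall y, ~ Cm.1 y -> d y (iter Cm.2 T y) < (p.+1%:R)^-1 *+ 2].
  have [||C [mC muC [m [pm hC]]]] := scale d mu hm hb T Tinv hTK hKT mT mTi pres D f injf dense fin n ninf rig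
     (p.+1%:R)^-1 (eps / 2 / (2 ^ p.+1)%:R) p.
  - by rewrite invr_gt0.
  - by rewrite !divr_gt0.
  by exists (C, m).
have [g Hg] := choice H.
exists (\bigcup_p (g p).1); split.
- by apply: bigcupT_measurable => p; have [] := Hg p.
- apply: (@le_lt_trans _ _ (\sum_(p <oo) mu (g p).1)%E).
    by apply: measure_sigma_subadditive => // [p|]; [have [] := Hg p | apply: bigcupT_measurable => p; have [] := Hg p].
  apply: (@le_lt_trans _ _ (\sum_(p <oo) (eps / 2 / (2 ^ p.+1)%:R)%:E)%E).
    by apply: lee_nneseries => [p _ _|p _]; [exact: measure_ge0 | have [_ /ltW] := Hg p].
  apply: (@le_lt_trans _ _ (eps / 2)%:E).
    by apply: (epsilon_trick0 xpredT); rewrite divr_ge0 // ltW.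
  by rewrite lte_fin; lra.
exists (fun p => (g p).2); split.
  move=> N; exists N => k Nk; have [_ _ kg _] := Hg k; exact: leq_trans kg.
move=> eta eta0.
exists (Num.Def.truncn (2 / eta)) => j Jj y By.
have [_ _ _ hy] := Hg j.
have := hy y (fun h => By (ex_intro2 _ _ j I h)).
move/lt_le_trans; apply.
have h1 := truncnS_gt (2 / eta).
have h2 : (Num.Def.truncn (2 / eta)).+1%:R <= j.+1%:R :> R by rewrite ler_nat.
have jp : 0 < j.+1%:R :> R by [].
have -> : (j.+1%:R)^-1 *+ 2 = 2 / j.+1%:R :> R.
  by rewrite [RHS]mulrC mulr_natr.
rewrite ler_pdivrMr //.
rewrite ltr_pdivrMr // in h1.
move: h1 h2; set t := _%:R; set u := _%:R => h1 h2.
nra.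
Qed.
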